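(* Let $k\ge 2$, let $G$ be a finite simple graph, and let $c:V(G)\to\{1,\dots,k\}$ be a coloring with $|c^{-1}(1)|=|c^{-1}(2)|=\dots=|c^{-1}(k)|$. Then $c$ is a neighborhood-balanced $k$-coloring of $G$ if and only if $c$ is a closed neighborhood balanced $k$-coloring of the complement $\overline{G}$.
   Context: For a vertex $v$, $N(v)=\{u: uv\in E\}$ and $N[v]=N(v)\cup\{v\}$. A neighborhood-balanced $k$-coloring of a graph is a map $c:V\to\{1,\dots,k\}$ such that for every vertex $v$ the numbers $|\{u\in N(v): c(u)=i\}|$, $i=1,\dots,k$, are all equal. A closed neighborhood balanced $k$-coloring is defined in the same way with $N[v]$ in place of $N(v)$. *)

(* Defs.v *)
From mathcomp Require Import all_boot.
Set Implicit Arguments. Unset Strict Implicit. Unset Printing Implicit Defensive.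

Definition simple_graph (T : finType) (e : rel T) : Prop :=
  symmetric e /\ irreflexive e.

Definition compl_graph (T : finType) (e : rel T) : rel T :=
  fun x y => (x != y) && ~~ e x y.

Definition nbhd (T : finType) (e : rel T) (v : T) : {set T} := [set u | e v u].
Definition cnbhd (T : finType) (e : rel T) (v : T) : {set T} := v |: nbhd e v.

(* Colours 1..k are represented by 'I_k (i.e. 0..k-1). *)
Definition nb_coloring (T : finType) (k : nat) (e : rel T) (c : T -> 'I_k) : Prop :=
  forall v (i j : 'I_k),
    #|[set u in nbhd e v | c u == i]| = #|[set u in nbhd e v | c u == j]|.

Definition cnb_coloring (T : finType) (k : nat) (e : rel T) (c : T -> 'I_k) : Prop :=
  forall v (i j : 'I_k),
    #|[set u in cnbhd e v | c u == i]| = #|[set u in cnbhd e v | c u == j]|.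

(* Main.v *)
Require Import Defs.
From mathcomp Require Import all_boot.

Lemma key_count (k : nat) (T : finType) (e : rel T) (c : T -> 'I_k) v i :
  irreflexive e ->
  #|[set u in cnbhd (compl_graph e) v | c u == i]| =
  #|[set u | c u == i]| - #|[set u in nbhd e v | c u == i]| /\
  #|[set u in nbhd e v | c u == i]| <= #|[set u | c u == i]|.
Proof.
move=> irr.
have sub : [set u in nbhd e v | c u == i] \subset [set u | c u == i].
  by apply/subsetP=> u; rewrite !inE => /andP[].
split; last exact: subset_leq_card.
have -> : [set u in cnbhd (compl_graph e) v | c u == i] =
  [set u | c u == i] :\: [set u in nbhd e v | c u == i].
  apply/setP=> u; rewrite !inE /compl_graph.
  case: (eqVneq u v) => [->|nuv]; first by rewrite irr /=; case: (c v == i).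
  by rewrite /=; case: (e v u); case: (c u == i).
by rewrite cardsD (setIidPr sub).
Qed.

Theorem theorem2p16 (k : nat) (T : finType) (e : rel T) (c : T -> 'I_k) :
  2 <= k ->
  simple_graph e ->
  (forall i j : 'I_k, #|[set v | c v == i]| = #|[set v | c v == j]|) ->
  (nb_coloring e c <-> cnb_coloring (compl_graph e) c).
Proof.
move=> _ [_ irr] eqc; split=> H v i j.
- have [-> hi] := key_count _ _ e c v i irr.
  have [-> hj] := key_count _ _ e c v j irr.
  by rewrite (H v i j) (eqc i j).
- have [ei hi] := key_count _ _ e c v i irr.
  have [ej hj] := key_count _ _ e c v j irr.
  have := H v i j; rewrite ei ej (eqc i j) => E.
  rewrite (eqc i j) in hi.
  by rewrite -(subKn hi) E subKn.
Qed.
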